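(* Let $N\ge 2$ and $\Omega$ the set of nonempty subsets of $\{1,\dots,N\}$. The Markov chain $R$ on $\Omega$ defined below is reversible with stationary distribution $\mathcal{M}(S)=3^{|S|}/(4^N-1)$ and has spectral gap $\lambda_R\ge \frac{1}{3N}$.
   Context: Chain $R$ on $\Omega$: from state $B$, choose $j\in\{1,\dots,N\}$ uniformly at random. If $j\in B$ and $|B|\ge2$, move to $B\setminus\{j\}$ with probability $1/3$ and stay at $B$ with probability $2/3$. If $j\in B$ and $|B|=1$, stay at $B$. If $j\notin B$, move to $B\cup\{j\}$. The spectral gap is $1$ minus the second largest eigenvalue of the transition matrix. *)

(* Defs.v *)
From HB Require Import structures.
From mathcomp Require Import all_boot all_order all_algebra.
From mathcomp Require Import polyrcf.
From mathcomp Require Import reals.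
Set Implicit Arguments. Unset Strict Implicit. Unset Printing Implicit Defensive.
Import Order.TTheory GRing.Theory Num.Theory.
Local Open Scope ring_scope.

(* State space: nonempty subsets of {1..N}, modelled as 'I_N. *)
Definition Omega (N : nat) := {B : {set 'I_N} | B != set0}.

Definition step (R : fieldType) (N : nat) (B : Omega N) (j : 'I_N) (B' : Omega N) : R :=
  let b := val B in let b' := val B' in
  if j \in b then
    (if (2 <= #|b|)%N then (1/3 : R) * (b' == b :\ j)%:R + (2/3 : R) * (b' == b)%:R
     else (b' == b)%:R)
  else (b' == j |: b)%:R.

Definition Rchain (R : fieldType) (N : nat) (B B' : Omega N) : R :=
  (N%:R)^-1 * \sum_(j : 'I_N) step R B j B'.

Definition Rmatrix (R : fieldType) (N : nat) : 'M[R]_#|{: Omega N}| :=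
  \matrix_(i, k) Rchain R (enum_val i) (enum_val k).

Definition Mdist (R : fieldType) (N : nat) (S : Omega N) : R :=
  (3 ^ #|val S|)%:R / ((4 ^ N)%:R - 1).

(* Real eigenvalues of A (roots of the characteristic polynomial), listed with
   algebraic multiplicity, in nonincreasing order. *)
Definition eigs_desc (R : rcfType) (n : nat) (A : 'M[R]_n) : seq R :=
  let p := char_poly A in
  sort (fun x y : R => y <= x) (flatten [seq nseq (mup x p) x | x <- rootsR p]).

Definition second_eig (R : rcfType) (n : nat) (A : 'M[R]_n) : R :=
  nth 0 (eigs_desc A) 1.

Definition spectral_gap (R : rcfType) (n : nat) (A : 'M[R]_n) : R :=
  1 - second_eig A.

(* Main.v *)
Require Import Defs.
From HB Require Import structures.
From mathcomp Require Import all_boot all_order all_algebra.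
From mathcomp Require Import polyrcf.
From mathcomp Require Import reals.
From mathcomp Require Import ring lra.
Import Order.TTheory GRing.Theory Num.Theory.
Local Open Scope ring_scope.

Set Implicit Arguments. Unset Strict Implicit. Unset Printing Implicit Defensive.


Section Split.
Variable R : realType.
Variable N : nat.

Lemma split_sum (C : {set 'I_N}) k (F : {set 'I_N} -> R) : k \notin C ->
  \sum_(S : {set 'I_N} | S \subset k |: C) F S = \sum_(T : {set 'I_N} | T \subset C) (F T + F (k |: T)).
Proof.
move=> kC; rewrite (bigID (fun S : {set 'I_N} => k \in S)) /= big_split /= addrC.
congr (_ + _).
  apply: eq_bigl => S; apply/idP/idP.
    case/andP => /subsetP sS kS; apply/subsetP => x xS.
    have := sS x xS; rewrite in_setU1 => /orP[/eqP Ex|//].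
    by move: kS; rewrite -Ex xS.
  move=> /subsetP sS; apply/andP; split.
    by apply/subsetP => x xS; rewrite in_setU1 sS ?orbT.
  by apply: contra kC => /sS.
rewrite (reindex_onto (fun T => k |: T) (fun S => S :\ k)); last first.
  by move=> S /andP[_ kS]; rewrite setD1K.
apply: eq_bigl => T; apply/idP/idP.
  case/andP => /andP[/subsetP sT _] /eqP E; apply/subsetP => x xT.
  have := sT x; rewrite !in_setU1 xT orbT => /(_ isT) /orP[/eqP Ex|//].
  have : k \in (k |: T) :\ k by rewrite E -Ex.
  by rewrite setD11.
move=> /subsetP sT; apply/andP; split; [apply/andP; split|].
- apply/subsetP => x; rewrite !in_setU1 => /orP[->//|/sT ->]; by rewrite orbT.
- by rewrite setU11.
- by rewrite setU1K //; apply: contra kC => /sT.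
Qed.

Definition mu (S : {set 'I_N}) : R := (3 ^ #|S|)%:R.

Lemma mu_U1 (a : {set 'I_N}) j : j \notin a -> mu (j |: a) = 3 * mu a.
Proof. by move=> ja; rewrite /mu cardsU1 ja add1n expnS natrM. Qed.

Lemma sum0 (F : {set 'I_N} -> R) : \sum_(S : {set 'I_N} | S \subset set0) F S = F set0.
Proof.
rewrite (eq_bigl (pred1 set0)) ?big_pred1_eq // => S; by rewrite subset0.
Qed.

Lemma set_ind (P : {set 'I_N} -> Prop) : P set0 ->
  (forall (C : {set 'I_N}) k, k \notin C -> P C -> P (k |: C)) -> forall C, P C.
Proof.
move=> P0 Pstep C; move Hn: #|C| => n; elim: n C Hn => [|n IH] C Hn.
  by move/eqP: Hn; rewrite cards_eq0 => /eqP ->.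
have : C != set0 by rewrite -card_gt0 Hn.
case/set0Pn => k kC; rewrite -(setD1K kC); apply: Pstep; first by rewrite setD11.
by apply: IH; move: Hn; rewrite (cardsD1 k) kC add1n => -[].
Qed.

Lemma sum_mu (C : {set 'I_N}) : \sum_(S : {set 'I_N} | S \subset C) mu S = 4 ^+ #|C|.
Proof.
elim/set_ind: C => [|C k kC IH]; first by rewrite sum0 /mu cards0 expr0.
rewrite split_sum // cardsU1 kC add1n exprS -IH mulr_sumr.
by apply: eq_bigr => T sT; rewrite mu_U1; [ring | apply: contra kC => /(subsetP sT)].
Qed.


Lemma sumO (F : {set 'I_N} -> R) :
  \sum_(S : Omega N) F (val S) = \sum_(T | T != set0) F T.
Proof. by rewrite (big_sub (fun T : {set 'I_N} => T != set0)). Qed.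

Lemma sumO_eq (T0 : {set 'I_N}) (h : {set 'I_N} -> R) : T0 != set0 ->
  \sum_(S : Omega N) (val S == T0)%:R * h (val S) = h T0.
Proof.
move=> hT; rewrite (sumO (fun T => (T == T0)%:R * h T)).
rewrite (bigD1 T0) //= eqxx mul1r big1 ?addr0 //.
by move=> T /andP[_ /negPf ->]; rewrite mul0r.
Qed.

Definition Pj (h : {set 'I_N} -> R) (S : {set 'I_N}) (j : 'I_N) : R :=
  if j \in S then (if (2 <= #|S|)%N then 1/3 * h (S :\ j) + 2/3 * h S else h S)
  else h (j |: S).

Lemma stepsum (S : Omega N) j (h : {set 'I_N} -> R) :
  \sum_(S' : Omega N) step R S j S' * h (val S') = Pj h (val S) j.
Proof.
have S0 : val S != set0 := valP S.
rewrite /step /Pj; case: ifP => jS.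
  case: ifP => c2.
    under eq_bigr do rewrite mulrDl -!mulrA.
    rewrite big_split /= -!mulr_sumr !sumO_eq ?mulrA //.
    apply/eqP => E; move: c2; rewrite (cardsD1 j (val S)) jS E cards0; by [].
  by rewrite sumO_eq.
rewrite sumO_eq //; apply/set0Pn; exists j; exact: setU11.
Qed.




Ltac simp := rewrite /= ?mulr0n ?mulr1n ?mulr0 ?addr0 ?add0r ?mul0r.

Definition stp (a : {set 'I_N}) (j : 'I_N) (b : {set 'I_N}) : R :=
  if j \in a then
    (if (2 <= #|a|)%N then (1/3 : R) * (b == a :\ j)%:R + (2/3 : R) * (b == a)%:R
     else (b == a)%:R)
  else (b == j |: a)%:R.

Lemma db_in (a b : {set 'I_N}) j : a != set0 -> b != set0 -> a != b -> j \in a ->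
  mu a * stp a j b = mu b * stp b j a.
Proof.
move=> a0 b0 ab ja.
have ba : (b == a) = false by rewrite eq_sym (negPf ab).
rewrite /stp ja ba (negPf ab) /= ?mulr0n !mulr0 !addr0.
have jaj : j \notin a :\ j by rewrite setD11.
case: ifP => c2.
  have [->|bj] := eqVneq b (a :\ j).
    rewrite (negPf jaj) setD1K // eqxx.
    by rewrite -{1}(setD1K ja) mu_U1 //= mulr1n mulr1; field.
  simp; case: ifP => jb.
    case: ifP => _; last by simp.
    suff -> : (a == b :\ j) = false by simp.
    by apply/negbTE; apply: contraTneq ja => ->; rewrite setD11.
  suff -> : (a == j |: b) = false by simp.
  apply/negbTE; apply: contra bj => /eqP ->; by rewrite setU1K ?jb.
simp; case: ifP => jb.
  case: ifP => _; last by simp.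
  suff -> : (a == b :\ j) = false by simp.
  by apply/negbTE; apply: contraTneq ja => ->; rewrite setD11.
suff -> : (a == j |: b) = false by simp.
apply/negbTE; apply: contraFN c2 => /eqP ->.
rewrite cardsU1 jb add1n ltnS lt0n cards_eq0 b0 //.
Qed.

Lemma db (a b : {set 'I_N}) j : a != set0 -> b != set0 ->
  mu a * stp a j b = mu b * stp b j a.
Proof.
move=> a0 b0; have [->//|ab] := eqVneq a b.
case ja: (j \in a); first exact: db_in.
case jb: (j \in b); first by symmetry; apply: db_in; rewrite // eq_sym.
rewrite /stp ja jb.
suff [-> ->] : (b == j |: a) = false /\ (a == j |: b) = false by simp.
split; apply/negbTE; apply/eqP => E.
  by move: jb; rewrite E setU11.
by move: ja; rewrite E setU11.
Qed.



End Split.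



Section ES.
Variable R : realType.
Variable N : nat.
Local Notation mu := (@mu R N).
Local Notation set := {set 'I_N}.

Definition Qf (C : set) (g : set -> R) := \sum_(S : set | S \subset C) mu S * g S ^+ 2.
Definition Af (C : set) (g : set -> R) := \sum_(S : set | S \subset C) mu S * g S.
Definition Hf (C : set) (g : set -> R) j :=
  \sum_(S : set | S \subset C) (if j \in S then 0 else mu S * (g (j |: S) - g S) ^+ 2).
Definition Df (C : set) (g : set -> R) := \sum_(j in C) Hf C g j.

Lemma mu_ge0 S : 0 <= mu S. Proof. by rewrite /mu ler0n. Qed.

Lemma CS (C : set) (h : set -> R) : Af C h ^+ 2 <= 4 ^+ #|C| * Qf C h.
Proof.
set W : R := 4 ^+ #|C|.
have W0 : 0 < W by rewrite exprn_gt0.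
have key : 0 <= W * (W * Qf C h - Af C h ^+ 2).
  have -> : W * (W * Qf C h - Af C h ^+ 2) =
    \sum_(S : set | S \subset C) mu S * (W * h S - Af C h) ^+ 2.
    transitivity (\sum_(S : set | S \subset C)
       (W ^+ 2 * (mu S * h S ^+ 2) - 2 * W * Af C h * (mu S * h S) + Af C h ^+ 2 * mu S)).
      rewrite big_split /= sumrB -!mulr_sumr -/(Qf C h) -/(Af C h) /W -sum_mu.
      rewrite -/W; ring.
    by apply: eq_bigr => S _; ring.
  by apply: sumr_ge0 => S _; apply: mulr_ge0; [apply: mu_ge0 | apply: sqr_ge0].
rewrite pmulr_rge0 // in key; lra.
Qed.


Lemma split_Q (C : set) k g : k \notin C ->
  Qf (k |: C) g = Qf C g + 3 * Qf C (fun T => g (k |: T)).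
Proof.
move=> kC; rewrite /Qf split_sum // big_split /= mulr_sumr; congr (_ + _).
apply: eq_bigr => T sT; rewrite mu_U1 ?mulrA //.
by apply: contra kC => /(subsetP sT).
Qed.

Lemma split_A (C : set) k g : k \notin C ->
  Af (k |: C) g = Af C g + 3 * Af C (fun T => g (k |: T)).
Proof.
move=> kC; rewrite /Af split_sum // big_split /= mulr_sumr; congr (_ + _).
apply: eq_bigr => T sT; rewrite mu_U1 ?mulrA //.
by apply: contra kC => /(subsetP sT).
Qed.

Lemma split_D (C : set) k g : k \notin C ->
  Df (k |: C) g = \sum_(T : set | T \subset C) mu T * (g (k |: T) - g T) ^+ 2
     + Df C g + 3 * Df C (fun T => g (k |: T)).
Proof.
move=> kC; rewrite /Df big_setU1 //= -addrA; congr (_ + _).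
  rewrite /Hf split_sum //; apply: eq_bigr => T sT.
  have kT : k \notin T by apply: contra kC => /(subsetP sT).
  by rewrite (negPf kT) setU11 addr0.
rewrite mulr_sumr -big_split /=; apply: eq_bigr => j jC.
rewrite /Hf split_sum // mulr_sumr -big_split /=; apply: eq_bigr => T sT.
have kT : k \notin T by apply: contra kC => /(subsetP sT).
have jk : j != k by apply: contraTneq jC => ->.
rewrite in_setU1 (negPf jk) /=; case: (j \in T); first by rewrite !mulr0 addr0.
rewrite mu_U1 // setUCA; ring.
Qed.

Lemma ES (C : set) g :
  4 * (4 ^+ #|C| * Qf C g - Af C g ^+ 2) <= 3 * 4 ^+ #|C| * Df C g.
Proof.
elim/set_ind: C g => [|C k kC IH] g.
  rewrite /Qf /Af /Df !sum0 big_set0 cards0 /mu cards0 expr0; lra.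
rewrite split_Q // split_A // split_D // cardsU1 kC add1n exprS.
set g1 := fun T => g (k |: T).
have I0 := IH g; have I1 := IH g1.
have Cs := CS C (fun T => g1 T - g T).
have E : Af C (fun T => g1 T - g T) = Af C g1 - Af C g.
  by rewrite /Af -sumrB; apply: eq_bigr => T _; ring.
rewrite E in Cs.
have -> : \sum_(T : set | T \subset C) mu T * (g (k |: T) - g T) ^+ 2 =
  Qf C (fun T => g1 T - g T) by [].
move: I0 I1 Cs; set W := 4 ^+ #|C|; set Q0 := Qf C g; set Q1 := Qf C g1;
  set A0 := Af C g; set A1 := Af C g1; set E1 := Qf C _;
  set D0 := Df C g; set D1 := Df C g1 => I0 I1 Cs.
nra.
Qed.

End ES.



Lemma detlemma (R' : comNzRingType) n (a : R') (u : 'cV[R']_n) (w : 'rV[R']_n) :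
  a * \det (a%:M - u *m w) = a ^+ n * (a - (w *m u) 0 0).
Proof.
pose M := block_mx (a%:M : 'M_n) u w (1%:M : 'M_1).
have h1 : M = block_mx 1%:M u 0 1%:M *m block_mx (a%:M - u *m w) 0 w 1%:M.
  rewrite mulmx_block !mul1mx !mul0mx ?mulmx0 !mulmx1 ?addr0 ?add0r.
  by rewrite subrK.
have h2 : block_mx 1%:M 0 (-w) (a%:M) *m M = block_mx (a%:M) u 0 (a%:M - w *m u).
  rewrite mulmx_block !mul1mx !mul0mx ?add0r ?addr0 ?mul_scalar_mx ?mul_mx_scalar.
  by rewrite scalerN addNr scalemx1 mulNmx addrC.
have dM : \det M = \det (a%:M - u *m w).
  by rewrite h1 det_mulmx det_ublock det_lblock !det1 !mul1r mulr1.
have := congr1 determinant h2.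
rewrite det_mulmx det_lblock det_ublock det1 mul1r det_scalar1 dM det_scalar.
by rewrite det_mx11 !mxE eqxx mulr1n => ->.
Qed.

Lemma charP_B (F : fieldType) n (P : 'M[F]_n) (u : 'cV[F]_n) (w : 'rV[F]_n) :
  P *m u = u -> w *m u = 1%:M ->
  'X * char_poly P = ('X - 1) * char_poly (P - u *m w).
Proof.
move=> Pu wu.
set B := P - u *m w.
have BJ : B *m (u *m w) = 0.
  by rewrite mulmxBl !mulmxA Pu -(mulmxA u w u) wu mulmx1 subrr.
have key : ('X%:M - map_mx polyC B) *m ('X%:M - map_mx polyC (u *m w)) = 'X *: ('X%:M - map_mx polyC P).
  rewrite mulmxBl !mulmxBr -!map_mxM BJ map_mx0 subr0.
  rewrite ?mul_scalar_mx ?mul_mx_scalar.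
  have -> : map_mx polyC P = map_mx polyC B + map_mx polyC (u *m w) by rewrite -map_mxD /B subrK.
  by rewrite scalerBr scalerDr opprD addrA addrAC.
have dl := detlemma 'X (map_mx polyC u) (map_mx polyC w).
rewrite -!map_mxM wu mxE mxE eqxx mulr1n in dl.
have dk := congr1 determinant key; rewrite det_mulmx detZ in dk.
rewrite /char_poly /char_poly_mx.
move: dk dl; set dB := \det (_ - map_mx _ B); set dJ := \det _; set dP := \det _.
move=> dk dl.
have Xn0 : ('X : {poly F}) ^+ n != 0 by rewrite expf_neq0 // polyX_eq0.
rewrite rmorph1 in dl. apply/(mulfI Xn0).
rewrite mulrA (mulrC _ 'X) -mulrA -dk mulrA (mulrC _ dB) -mulrA dl.
by rewrite mulrCA [dB * _]mulrC.
Qed.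



Section Eigs.
Variable R : rcfType.

Lemma cnt_aux (p : {poly R}) (c : R) (r : seq R) : uniq r ->
  (forall x, x \in r -> c < x -> x = 1) ->
  (sumn [seq (c < x)%R * mup x p | x <- r] <= ((1%R : R) \in r) * mup 1%R p)%N.
Proof.
elim: r => [//|x r IH] /= /andP[xr ur] H.
have H' : forall y, y \in r -> c < y -> y = 1 by move=> y yr; apply: H; rewrite in_cons yr orbT.
have IH' := IH ur H'.
case: (ltP c x) => cx /=.
  have x1 := H x (mem_head _ _) cx; subst x.
  have : (1 \in r) = false by apply/negbTE.
  move=> E; rewrite E /= mul0n in IH'.
  by rewrite leqn0 in IH'; rewrite (eqP IH') in_cons eqxx /= mul1n addn0.
rewrite mul0n add0n (leq_trans IH') // leq_mul2r in_cons.
by case: (1 \in r); rewrite ?orbT ?orbF ?leqnn ?leq0n ?orbT.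
Qed.

Lemma nth1_le (p : {poly R}) (c : R) : p != 0 -> 0 <= c ->
  (forall x, root p x -> c < x -> x = 1) -> (mup 1 p <= 1)%N ->
  nth 0 (sort (fun x y : R => y <= x)
    (flatten [seq nseq (mup x p) x | x <- rootsR p])) 1 <= c.
Proof.
move=> p0 c0 H m1.
set s := sort _ _.
have cnt : (count (fun y : R => (c < y)%R) s <= 1)%N.
  have Pe : perm_eq s (flatten [seq nseq (mup x p) x | x <- rootsR p]).
    by rewrite /s perm_sort.
  rewrite (permP Pe).
  rewrite count_flatten -map_comp.
  have -> : [seq (count (fun y : R => (c < y)%R) \o (fun x => nseq (mup x p) x)) i | i <- rootsR p]
    = [seq ((c < x)%R * mup x p)%N | x <- rootsR p].
    by apply: eq_map => x /=; rewrite count_nseq.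
  have U : uniq (rootsR p) by rewrite /rootsR; apply: uniq_roots.
  have Hr : forall x, x \in rootsR p -> c < x -> x = 1.
    by move=> x xr; apply: H; move: xr; rewrite /rootsR; apply: root_roots.
  have := @cnt_aux p c (rootsR p) U Hr => Hle; apply: leq_trans Hle _.
  by case: (1 \in _); rewrite ?mul1n ?mul0n.
have srt : sorted (fun x y : R => y <= x) s.
  by apply: sort_sorted => x y; apply: le_total.
rewrite leNgt; apply/negP => cb.
move: cnt srt cb; case: s => [|a [|b t]] //=; first by rewrite ltNge c0.
  by rewrite ltNge c0.
move=> cnt /andP[ba _] cb.
have ca : c < a by apply: lt_le_trans ba.
by rewrite ca cb in cnt.
Qed.

End Eigs.



Section Eig.
Variable R : realType.
Variable N : nat.
Local Notation mu := (@mu R N).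
Local Notation set := {set 'I_N}.

Lemma reindexU1 j (F : set -> R) :
  \sum_(T : set | j \in T) F T = \sum_(U : set | j \notin U) F (j |: U).
Proof.
rewrite (reindex_onto (fun U : set => j |: U) (fun T => T :\ j)); last first.
  by move=> T jT; rewrite setD1K.
apply: eq_bigl => U; rewrite setU11 /=.
apply/eqP/idP => [E|jU]; last by rewrite setU1K.
by rewrite -E setD11.
Qed.

Lemma perj (g : set -> R) j :
  \sum_(T : set) (if T == set0 then 0 else mu T * g T * (g T - Pj g T j)) =
  \sum_(T : set) (if (T == set0) || (j \in T) then 0
                  else mu T * (g (j |: T) - g T) ^+ 2).
Proof.
rewrite (bigID (fun T : set => j \in T)) /= reindexU1.
rewrite [RHS](bigID (fun T : set => j \in T)) /= [in RHS]big1; last first.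
  by move=> T ->; rewrite orbT.
rewrite add0r -big_split /=; apply: eq_bigr => U jU.
rewrite (negPf jU) orbF /Pj setU11 (negPf jU).
have U1 : (j |: U == set0) = false by apply/negbTE/set0Pn; exists j; rewrite setU11.
rewrite U1 setU1K // cardsU1 jU add1n ltnS lt0n cards_eq0.
case: eqP => [->|_]; first by rewrite subrr mulr0 add0r.
by rewrite mu_U1 // /=; field.
Qed.


Lemma Rsum (S : Omega N) (h : set -> R) :
  \sum_(S' : Omega N) Rchain R S S' * h (val S') = N%:R^-1 * \sum_j Pj h (val S) j.
Proof.
rewrite /Rchain; under eq_bigr do rewrite -mulrA; rewrite -mulr_sumr; congr (_ * _).
under eq_bigr do rewrite mulr_suml; rewrite exchange_big; apply: eq_bigr => j _.
exact: stepsum.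
Qed.

Lemma rowsum (S : Omega N) : (0 < N)%N -> \sum_(S' : Omega N) Rchain R S S' = 1.
Proof.
move=> N0; have := Rsum S (fun _ => 1).
under eq_bigr do rewrite mulr1.
move=> ->.
have -> : \sum_j Pj (fun _ : set => (1 : R)) (val S) j = \sum_(j : 'I_N) (1 : R).
  apply: eq_bigr => j _; rewrite /Pj; case: ifP => _ //; case: ifP => _ //.
  by rewrite !mulr1; field.
by rewrite sumr_const card_ord mulVf // pnatr_eq0 -lt0n.
Qed.


Lemma mu_gt0 (T : set) : 0 < mu T.
Proof. by rewrite /mu ltr0n expn_gt0. Qed.

Lemma sumOc (F : set -> R) :
  \sum_(S : Omega N) F (val S) = \sum_(T : set) (if T == set0 then 0 else F T).
Proof.
rewrite sumO big_mkcond; apply: eq_bigr => T _; by case: (T == set0).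
Qed.

Lemma Hf_eq (g : set -> R) j : g set0 = 0 ->
  Hf setT g j = \sum_(T : set) (if (T == set0) || (j \in T) then 0
                  else mu T * (g (j |: T) - g T) ^+ 2) + g [set j] ^+ 2.
Proof.
move=> g0; rewrite /Hf (eq_bigl (fun _ => true)); last by move=> S; rewrite subsetT.
rewrite (bigD1 set0) //=.
rewrite [in RHS](bigD1 set0) //= eqxx add0r addrC in_set0 setU0 g0 subr0.
rewrite /mu cards0 expn0 mul1r; congr (_ + _).
by apply: eq_bigr => T /negPf ->.
Qed.

Lemma sing_bound (g : set -> R) :
  3 * \sum_(j : 'I_N) g [set j] ^+ 2 <= \sum_(T : set) mu T * g T ^+ 2.
Proof.
have -> : 3 * \sum_(j : 'I_N) g [set j] ^+ 2 = \sum_(j in 'I_N) mu [set j] * g [set j] ^+ 2.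
  by rewrite mulr_sumr; apply: eq_bigr => j _; rewrite /mu cards1 expn1.
rewrite -(big_imset (fun T => mu T * g T ^+ 2) (in2W set1_inj)) /=.
rewrite [X in _ <= X](bigID (fun T => T \in [set [set j] | j in 'I_N])) /= lerDl.
by apply: sumr_ge0 => T _; apply: mulr_ge0; [apply: mu_ge0|apply: sqr_ge0].
Qed.


Lemma eig_bound (vO : Omega N -> R) (x : R) : (0 < N)%N ->
  (forall S', \sum_(S : Omega N) vO S * Rchain R S S' = x * vO S') ->
  \sum_(S : Omega N) vO S = 0 -> (exists S, vO S != 0) -> x <= 1 - N%:R^-1.
Proof.
move=> N0 eig s0 [S0 nz].
pose g (T : set) : R := if insub T is Some s then vO s / mu T else 0.
have gval : forall S : Omega N, g (val S) = vO S / mu (val S).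
  by move=> S; rewrite /g valK.
have g0 : g set0 = 0 by rewrite /g insubF // eqxx.
have vg : forall S : Omega N, vO S = mu (val S) * g (val S).
  by move=> S; rewrite gval mulrC divfK // gt_eqF // mu_gt0.
set V := \sum_(T : set) mu T * g T ^+ 2.
have hV : V = \sum_(S : Omega N) vO S * g (val S).
  transitivity (\sum_(S : Omega N) mu (val S) * g (val S) ^+ 2).
    rewrite (sumOc (fun T => mu T * g T ^+ 2)) /V; apply: eq_bigr => T _; case: eqP => [->|//].
    by rewrite g0 expr2 !mulr0.
  by apply: eq_bigr => S _; rewrite [vO S]vg; ring.
have Vpos : 0 < V.
  rewrite hV (bigD1 S0) //=.
  have h1 : 0 < vO S0 * g (val S0).
    rewrite [vO S0]vg -mulrA -expr2 mulr_gt0 ?mu_gt0 // lt_def sqr_ge0 andbT.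
    by rewrite sqrf_eq0; apply: contra nz => /eqP E; rewrite vg E mulr0.
  have h2 : 0 <= \sum_(S | S != S0) vO S * g (val S).
    apply: sumr_ge0 => S _; rewrite [vO S]vg -mulrA -expr2.
    by apply: mulr_ge0; [apply: mu_ge0|apply: sqr_ge0].
  lra.
have hx : x * V = \sum_(S : Omega N) vO S * (N%:R^-1 * \sum_j Pj g (val S) j).
  rewrite hV mulr_sumr.
  transitivity (\sum_(S' : Omega N) (\sum_(S : Omega N) vO S * Rchain R S S') * g (val S')).
    by apply: eq_bigr => S' _; rewrite eig mulrA.
  under eq_bigr do rewrite mulr_suml.
  rewrite exchange_big; apply: eq_bigr => S _.
  rewrite -Rsum mulr_sumr; apply: eq_bigr => S' _; exact: esym (mulrA _ _ _).
have Nne0 : (N%:R : R) != 0 by rewrite pnatr_eq0 -lt0n.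
have hV2 : V = \sum_(S : Omega N) vO S * (N%:R^-1 * \sum_(j : 'I_N) g (val S)).
  rewrite hV; apply: eq_bigr => S _.
  rewrite sumr_const card_ord; congr (_ * _); by rewrite -[g (val S) *+ N]mulr_natr mulrCA mulVf ?mulr1.
have E1 : (1 - x) * V = N%:R^-1 * \sum_(j : 'I_N) \sum_(T : set)
     (if T == set0 then 0 else mu T * g T * (g T - Pj g T j)).
  rewrite mulrBl mul1r {1}hV2 hx -sumrB.
  transitivity (\sum_(S : Omega N) N%:R^-1 *
       \sum_j (mu (val S) * g (val S) * (g (val S) - Pj g (val S) j))).
    apply: eq_bigr => S _; rewrite -!mulrBr -sumrB [vO S]vg !mulr_sumr.
    by apply: eq_bigr => j _; ring.
  rewrite -mulr_sumr exchange_big; congr (_ * _); apply: eq_bigr => j _.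
  exact: (sumOc (fun T => mu T * g T * (g T - Pj g T j))).
rewrite (eq_bigr _ (fun j _ => perj g j)) in E1.
set Es := \sum_(j : 'I_N) _ in E1.
set G := \sum_(j : 'I_N) g [set j] ^+ 2.
have es := ES [set: 'I_N] g.
have hQ : Qf [set: 'I_N] g = V.
  by rewrite /Qf (eq_bigl (fun _ => true)) // => T; rewrite subsetT.
have hA : Af [set: 'I_N] g = 0.
  rewrite /Af (eq_bigl (fun _ => true)); last by move=> T; rewrite subsetT.
  transitivity (\sum_(S : Omega N) vO S); last exact: s0.
  under [RHS]eq_bigr do rewrite vg.
  rewrite (sumOc (fun T => mu T * g T)); apply: eq_bigr => T _.
  by case: eqP => [->|//]; rewrite g0 mulr0.
have hD : Df [set: 'I_N] g = Es + G.
  rewrite /Df (eq_bigl (fun _ => true)); last by move=> j; rewrite in_setT.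
  by rewrite -big_split /=; apply: eq_bigr => j _; rewrite Hf_eq.
rewrite hQ hA hD cardsT card_ord in es.
have sb := sing_bound g; rewrite -/V -/G in sb.
have Wpos : (0 : R) < 4 ^+ N by rewrite exprn_gt0.
have h4 : 4 * V <= 3 * (Es + G).
  rewrite -(ler_pM2l Wpos); move: es; set W := 4 ^+ N => es; lra.
have Nipos : (0 : R) < N%:R^-1 by rewrite invr_gt0 ltr0n.
have h5 : N%:R^-1 * V <= N%:R^-1 * Es by rewrite ler_pM2l //; lra.
rewrite -(ler_pM2r Vpos); lra.
Qed.

End Eig.


Section Main.
Variable R : realType.
Variable N : nat.
Local Notation mu := (@mu R N).
Local Notation set := {set 'I_N}.

Lemma MdistE (S : Omega N) : Mdist R S = mu (val S) / ((4 ^ N)%:R - 1).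
Proof. by []. Qed.

Lemma revE (S S' : Omega N) :
  Mdist R S * Rchain R S S' = Mdist R S' * Rchain R S' S.
Proof.
rewrite !MdistE /Rchain.
have E : mu (val S) * \sum_j step R S j S' = mu (val S') * \sum_j step R S' j S.
  rewrite !mulr_sumr; apply: eq_bigr => j _; exact: (@db R N (val S) (val S') j (valP S) (valP S')).
set Z := (_ - 1); set A := \sum_j _; set B := \sum_j _.
rewrite -/A -/B in E.
transitivity (Z^-1 * N%:R^-1 * (mu (val S) * A)); first by ring.
by rewrite E; ring.
Qed.

Lemma sum_mu_all : \sum_(T : set) mu T = 4 ^+ N.
Proof.
have := @sum_mu R N [set: 'I_N]; rewrite cardsT card_ord => <-.
by apply: eq_bigl => T; rewrite subsetT.
Qed.

Lemma sumE (F : Omega N -> R) :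
  \sum_(i < #|{: Omega N}|) F (enum_val i) = \sum_(S : Omega N) F S.
Proof. by rewrite -big_enum_val. Qed.

End Main.

Unset Implicit Arguments.

Theorem mainTheorem6 (R : realType) (N : nat) (hN : (2 <= N)%N) :
  (* M is a probability distribution on Omega *)
  (forall S : Omega N, 0 <= Mdist R S) /\ (\sum_(S : Omega N) Mdist R S = 1) /\
  (* M is stationary for R *)
  (forall S' : Omega N, \sum_(S : Omega N) Mdist R S * Rchain R S S' = Mdist R S') /\
  (* R is reversible with respect to M *)
  (forall S S' : Omega N, Mdist R S * Rchain R S S' = Mdist R S' * Rchain R S' S) /\
  (* spectral gap lower bound *)
  spectral_gap (Rmatrix R N) >= (3 * N)%:R^-1.
Proof.
have N0 : (0 < N)%N by apply: leq_trans hN.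
have Zpos : (0 : R) < (4 ^ N)%:R - 1.
  rewrite subr_gt0 ltr1n -{1}(expn0 4) ltn_exp2l //.
have Msum : \sum_(S : Omega N) Mdist R S = 1.
  under eq_bigr do rewrite MdistE.
  rewrite -mulr_suml (sumO (fun T => @mu R N T)).
  have := sum_mu_all R N; rewrite (bigD1 set0) //= => E.
  have -> : \sum_(T | T != set0) @mu R N T = (4 ^ N)%:R - 1.
    by rewrite natrX -E /mu cards0 expn0 addrC addrK.
  by rewrite divff // gt_eqF.
split.
  by move=> S; rewrite MdistE divr_ge0 // ?ler0n // ltW.
split; first exact: Msum.
split.
  move=> S'; under eq_bigr do rewrite revE.
  by rewrite -mulr_sumr rowsum // mulr1.
split; first exact: revE.
set n := #|{: Omega N}|.
set P := Rmatrix R N.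
pose u : 'cV[R]_n := const_mx 1.
pose w : 'rV[R]_n := \row_i Mdist R (enum_val i).
have Pu : P *m u = u.
  apply/matrixP => i j; rewrite !mxE.
  under eq_bigr do rewrite !mxE mulr1.
  by rewrite (sumE (fun S => Rchain R (enum_val i) S)) rowsum.
have wu : w *m u = 1%:M.
  apply/matrixP => i j; rewrite !ord1 !mxE eqxx.
  under eq_bigr do rewrite !mxE mulr1.
  by rewrite (sumE (fun S => Mdist R S)).
have chp := charP_B Pu wu.
set B := P - u *m w in chp.
have Nipos : (0 : R) < N%:R^-1 by rewrite invr_gt0 ltr0n.
have Nile1 : (N%:R^-1 : R) <= 1.
  by rewrite invf_le1 ?ltr0n // ler1n.
have eigB : forall x, root (char_poly B) x -> x <= 1 - N%:R^-1.
  move=> x; rewrite -eigenvalue_root_char => /eigenvalueP [v vB vnz].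
  case: (lerP x 0) => [x0|xpos]; first lra.
  have Bu : B *m u = 0 by rewrite mulmxBl Pu -mulmxA wu mulmx1 subrr.
  have vu : v *m u = 0.
    have : x *: (v *m u) = 0 by rewrite scalemxAl -vB -mulmxA Bu mulmx0.
    by move/eqP; rewrite scaler_eq0 gt_eqF //= => /eqP.
  have vP : v *m P = x *: v.
    by rewrite -vB /B mulmxBr mulmxA vu mul0mx subr0.
  pose vO (S : Omega N) := v 0 (enum_rank S).
  apply: (@eig_bound R N vO x N0).
  - move=> S'; have := congr1 (fun M : 'rV[R]_n => M 0 (enum_rank S')) vP; rewrite !mxE => <-.
    rewrite -(sumE (fun S => vO S * Rchain R S S')); apply: eq_bigr => k _.
    by rewrite !mxE /vO enum_valK enum_rankK.
  - transitivity ((v *m u) 0 0); last by rewrite vu mxE.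
    rewrite mxE -(sumE vO); apply: eq_bigr => k _.
    by rewrite mxE mulr1 /vO enum_valK.
  - have [k vk] : exists k, v 0 k != 0.
      apply/existsP; apply: contraR vnz => /existsPn H.
      by apply/eqP/rowP => k; rewrite mxE; apply/eqP; rewrite -[_ == _]negbK H.
    by exists (enum_val k); rewrite /vO enum_valK.
set c : R := 1 - (3 * N)%:R^-1.
have Nc : 1 - N%:R^-1 < c.
  rewrite /c natrM invfM; have : (0 : R) < 3^-1 by rewrite invr_gt0.
  move=> h3; have : (3^-1 : R) < 1 by rewrite invf_lt1 ?ltr1n.
  move=> h3'; nra.
have c0 : 0 <= c by lra.
have B1 : ~~ root (char_poly B) 1.
  by apply/negP => /eigB; lra.
have pne0 : char_poly P != 0 by apply: monic_neq0; apply: char_poly_monic.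
have pBne0 : char_poly B != 0 by apply: monic_neq0; apply: char_poly_monic.
have roots1 : forall x, root (char_poly P) x -> c < x -> x = 1.
  move=> x rx cx; apply/eqP; apply: contraTT rx => x1.
  have := congr1 (fun q => q.[x]) chp; rewrite /= !hornerM hornerX hornerD hornerN hornerX hornerC.
  move=> E; apply/negP => /eqP rx; rewrite rx mulr0 in E.
  have : (char_poly B).[x] = 0.
    by apply/eqP; move/eqP: E; rewrite eq_sym mulf_eq0 subr_eq0 (negPf x1).
  move/eqP => /eigB; lra.
have mup1 : (mup 1 (char_poly P) <= 1)%N.
  have : mup 1 ('X * char_poly P) = mup 1 (('X - 1) * char_poly B) by rewrite chp.
  rewrite mupMr; last by rewrite rootX oner_eq0.
  rewrite mupMl // -[X in 'X - X]polyC1 -['X - 1%:P]expr1 mup_XsubCX eqxx => ->.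
  by [].
have := nth1_le pne0 c0 roots1 mup1.
rewrite /spectral_gap /second_eig /eigs_desc /c; lra.
Qed.
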